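(* Let $S=\operatorname{FInv}\langle X\mid R\rangle$ with $R$ a symmetric relation on $\mathbb{I}\mathfrak{m}_X$, and let $\Gamma_X$ be the Cayley graph of its greatest group image $G$. Then for every term $w\in\mathbb{I}\mathfrak{m}_X$, the $F$-Schützenberger graph $F\Gamma(w)$ equals $\langle\overline w\rangle^{c_R}$, the smallest $c_R$-closed subgraph of $\Gamma_X$ containing $\langle\overline w\rangle$. Furthermore $F\Gamma(w)=\bigcup_{i\ge0}\Delta_i$, where $\Delta_0=\langle\overline w\rangle$ and $\Delta_{i+1}$ is the full $P$-expansion of $\Delta_i$ with respect to $R$.
   Context: $\operatorname{FInv}\langle X\mid R\rangle$ is the quotient of the free $F$-inverse monoid on $X$ (signature $(\cdot,1,{}^{-1},{}^{\mathfrak m})$, $s^{\mathfrak m}$ the greatest element of the $\sigma$-class of $s$) by the congruence generated by $R$. $\mathbb{I}\mathfrak{m}_X$ is the set of terms $u_0v_1^{\mathfrak m}u_1\cdots v_n^{\mathfrak m}u_n$ ($u_i,v_i\in(X\cup X^{-1})^*$). $\Gamma_X$: vertices $G$, edge labeled $x$ from $g$ to $gx_G$ ($x\in X\cup X^{-1}$) with inverse edges; subgraphs closed under endpoints and inverses. The journey labeled $w$ from $g$ is $g\overline w=(g\overline{u_0},g(u_0v_1)_G\overline{u_1},\dots,g(u_0v_1\cdots u_{n-1}v_n)_G\overline{u_n})$, $h\overline u$ the path from $h$ labeled by word $u$, $\overline w=1\overline w$; $\langle g\overline w\rangle$ is the union of the subgraphs spanned by its paths; $w$ labels a journey in $\Delta$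 from $g$ to $h$ if $gw_G=h$ and $\langle g\overline w\rangle\subseteq\Delta$. For a symmetric relation $Q$ on $\mathbb{I}\mathfrak{m}_X$ with pairs equal in $G$, a subgraph $\Delta$ is $c_Q$-closed if for all $(u,v)\in Q$ and $g,h\in V(\Delta)$, $u$ labels a journey in $\Delta$ from $g$ to $h$ iff $v$ does, and $\Delta^{c_Q}$ is the intersection of the $c_Q$-closed subgraphs containing $\Delta$. $c_S=c_Q$ for $Q=\{(u,v):u_S=v_S\}$, and $F\Gamma(w)=\langle\overline w\rangle^{c_S}$. The full $P$-expansion of $\Delta$ with respect to $R$ is $\Delta\cup\bigcup\langle g\overline v\rangle$ over all $(u,v)\in R$, $g\in V(\Delta)$ with $\langle g\overline u\rangle\subseteq\Delta$. *)

(* Defs.v *)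
From Stdlib Require Import List ClassicalEpsilon.
Import ListNotations.

Section Terms.
Context {X : Type}.

(* a letter of X ∪ X^{-1}: (x,false) = x, (x,true) = x^{-1} *)
Definition letter : Type := (X * bool)%type.
Definition word : Type := list letter.
Definition linv (a : letter) : letter := (fst a, negb (snd a)).

(* terms of the full signature (·, 1, ^{-1}, ^m) over X *)
Inductive fterm : Type :=
| FVar (x : X) | FOne | FMul (a b : fterm) | FInv (a : fterm) | FM (a : fterm).

(* an element u0 v1^m u1 ... vn^m un of Im_X :
   im_head = u0, im_tail = [(v1,u1); ...; (vn,un)] *)
Record imterm : Type := IM { im_head : word; im_tail : list (word * word) }.

Definition lterm (a : letter) : fterm :=
  if snd a then FInv (FVar (fst a)) else FVar (fst a).
Fixpoint wterm (u : word) : fterm :=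
  match u with [] => FOne | a :: u' => FMul (lterm a) (wterm u') end.
Fixpoint tail_term (acc : fterm) (t : list (word * word)) : fterm :=
  match t with
  | [] => acc
  | (v, u) :: t' => tail_term (FMul (FMul acc (FM (wterm v))) (wterm u)) t'
  end.
Definition imterm_term (w : imterm) : fterm := tail_term (wterm (im_head w)) (im_tail w).
End Terms.
Arguments letter : clear implicits.
Arguments word : clear implicits.
Arguments fterm : clear implicits.
Arguments imterm : clear implicits.

Record FInvMonoid : Type := {
  car :> Type;
  fmul : car -> car -> car;
  fone : car;
  finv : car -> car;
  fmx  : car -> car;
  fmulA : forall a b c, fmul a (fmul b c) = fmul (fmul a b) c;
  fmul1l : forall a, fmul fone a = a;
  fmul1r : forall a, fmul a fone = a;
  finv_reg1 : forall a, fmul (fmul a (finv a)) a = a;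
  finv_reg2 : forall a, fmul (fmul (finv a) a) (finv a) = finv a;
  fidem_comm : forall e f, fmul e e = e -> fmul f f = f -> fmul e f = fmul f e;
  (* s^m is the greatest element (natural order) of the sigma-class of s *)
  fmx_sigma : forall a, exists e, fmul e e = e /\ fmul e a = fmul e (fmx a);
  fmx_max : forall a b, (exists e, fmul e e = e /\ fmul e a = fmul e b) ->
                        exists e, fmul e e = e /\ b = fmul e (fmx a)
}.

Fixpoint eval {X : Type} (M : FInvMonoid) (f : X -> car M) (t : fterm X) : car M :=
  match t with
  | FVar x => f x
  | FOne => fone M
  | FMul a b => fmul M (eval M f a) (eval M f b)
  | FInv a => finv M (eval M f a)
  | FM a => fmx M (eval M f a)
  end.

Section Presentation.
Context {X : Type} (R : imterm X -> imterm X -> Prop).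

(* equality in S = FInv<X|R>: the quotient of the free F-inverse monoid on X by
   the congruence generated by R, i.e. equality in every F-inverse monoid under
   every assignment of X satisfying R *)
Definition SEq (a b : fterm X) : Prop :=
  forall (M : FInvMonoid) (f : X -> car M),
    (forall u v, R u v -> eval M f (imterm_term u) = eval M f (imterm_term v)) ->
    eval M f a = eval M f b.

Definition GEq (a b : fterm X) : Prop :=
  exists e, SEq (FMul e e) e /\ SEq (FMul e a) (FMul e b).

Definition Gimg : Type := { P : fterm X -> Prop | exists t, P = GEq t }.
Definition gcls (t : fterm X) : Gimg := exist _ (GEq t) (ex_intro _ t eq_refl).
Definition grep (g : Gimg) : fterm X :=
  proj1_sig (constructive_indefinite_description _ (proj2_sig g)).
Definition gact (g : Gimg) (t : fterm X) : Gimg := gcls (FMul (grep g) t).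
Definition gone : Gimg := gcls FOne.
Definition gstep (g : Gimg) (a : letter X) : Gimg := gact g (lterm a).

(* ---------- subgraphs of the Cayley graph Gamma_X ----------
   The edges of Gamma_X are the pairs (g,a), a in X ∪ X^{-1}: the edge labelled a
   from g to g a_G; its inverse edge is (g a_G, a^{-1}). *)
Record subgraph : Type := SG { sgV : Gimg -> Prop; sgE : Gimg -> letter X -> Prop }.

Definition is_subgraph (D : subgraph) : Prop :=
  forall g a, sgE D g a -> sgV D g /\ sgV D (gstep g a) /\ sgE D (gstep g a) (linv a).

Definition sg_sub (D1 D2 : subgraph) : Prop :=
  (forall g, sgV D1 g -> sgV D2 g) /\ (forall g a, sgE D1 g a -> sgE D2 g a).
Definition sg_eq (D1 D2 : subgraph) : Prop := sg_sub D1 D2 /\ sg_sub D2 D1.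

Definition sg_union (D1 D2 : subgraph) : subgraph :=
  SG (fun g => sgV D1 g \/ sgV D2 g) (fun g a => sgE D1 g a \/ sgE D2 g a).
Definition sg_empty : subgraph := SG (fun _ => False) (fun _ _ => False).
Definition sg_bigunion (F : nat -> subgraph) : subgraph :=
  SG (fun g => exists i, sgV (F i) g) (fun g a => exists i, sgE (F i) g a).

Definition gen_sg (V0 : Gimg -> Prop) (E0 : Gimg -> letter X -> Prop) : subgraph :=
  SG (fun g => forall D, is_subgraph D -> (forall h, V0 h -> sgV D h) ->
                 (forall h b, E0 h b -> sgE D h b) -> sgV D g)
     (fun g a => forall D, is_subgraph D -> (forall h, V0 h -> sgV D h) ->
                 (forall h b, E0 h b -> sgE D h b) -> sgE D g a).

Fixpoint pathV (h : Gimg) (u : word X) (g : Gimg) : Prop :=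
  match u with [] => g = h | a :: u' => g = h \/ pathV (gstep h a) u' g end.
Fixpoint pathE (h : Gimg) (u : word X) (g : Gimg) (b : letter X) : Prop :=
  match u with [] => False | a :: u' => (g = h /\ b = a) \/ pathE (gstep h a) u' g b end.
Definition path_sg (h : Gimg) (u : word X) : subgraph := gen_sg (pathV h u) (pathE h u).

(* <g w-bar>: union of the subgraphs spanned by the paths
   g(u0 v1 ... u_{i-1} v_i)_G u_i-bar ; acc = u0 v1 ... u_{i-1} v_i *)
Fixpoint jsp (g : Gimg) (acc u : word X) (t : list (word X * word X)) : subgraph :=
  sg_union (path_sg (gact g (wterm acc)) u)
    (match t with
     | [] => sg_empty
     | (v, u') :: t' => jsp g (acc ++ u ++ v) u' t'
     end).
Definition journey_sg (g : Gimg) (w : imterm X) : subgraph :=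
  jsp g [] (im_head w) (im_tail w).

Definition labels_journey (D : subgraph) (w : imterm X) (g h : Gimg) : Prop :=
  gact g (imterm_term w) = h /\ sg_sub (journey_sg g w) D.

Definition cQ_closed (Q : imterm X -> imterm X -> Prop) (D : subgraph) : Prop :=
  forall u v g h, Q u v -> sgV D g -> sgV D h ->
    (labels_journey D u g h <-> labels_journey D v g h).

Definition cQ_closure (Q : imterm X -> imterm X -> Prop) (D : subgraph) : subgraph :=
  SG (fun g => forall D', is_subgraph D' -> cQ_closed Q D' -> sg_sub D D' -> sgV D' g)
     (fun g a => forall D', is_subgraph D' -> cQ_closed Q D' -> sg_sub D D' -> sgE D' g a).

Definition QS (u v : imterm X) : Prop := SEq (imterm_term u) (imterm_term v).

Definition wbar (w : imterm X) : subgraph := journey_sg gone w.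

Definition FGamma (w : imterm X) : subgraph := cQ_closure QS (wbar w).

Definition P_expansion (D : subgraph) : subgraph :=
  SG (fun g => sgV D g \/ exists u v h, R u v /\ sgV D h /\
                 sg_sub (journey_sg h u) D /\ sgV (journey_sg h v) g)
     (fun g a => sgE D g a \/ exists u v h, R u v /\ sgV D h /\
                 sg_sub (journey_sg h u) D /\ sgE (journey_sg h v) g a).

Fixpoint Delta (w : imterm X) (n : nat) : subgraph :=
  match n with O => wbar w | S n' => P_expansion (Delta w n') end.

End Presentation.

(* Main.v *)
Require Import Defs.
From Stdlib Require Import List ClassicalEpsilon FunctionalExtensionality PropExtensionality ProofIrrelevance Arith Lia.
Import ListNotations.

Section Alg.
Variable M : FInvMonoid.
Local Notation "a ** b" := (fmul M a b) (at level 40, left associativity).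
Local Notation "a ^-" := (finv M a) (at level 20).

Lemma idem_aai (a : M) : (a ** a^-) ** (a ** a^-) = a ** a^-.
Proof. rewrite fmulA, finv_reg1. reflexivity. Qed.
Lemma idem_iaa (a : M) : (a^- ** a) ** (a^- ** a) = a^- ** a.
Proof. rewrite fmulA, finv_reg2. reflexivity. Qed.

Lemma mx_lemma (a : M) : a ** a^- ** fmx M a = a.
Proof.
  destruct (fmx_max M a a) as [e [He Ha]].
  { exists (fone M). split; [apply fmul1l|reflexivity]. }
  assert (E : a ** a^- = a ** a^- ** e).
  { assert (Hea : e ** a = a) by (rewrite Ha, fmulA, He; reflexivity).
    rewrite (fidem_comm M (a ** a^-) e (idem_aai a) He).
    rewrite fmulA, Hea. reflexivity. }
  rewrite E, <- (fmulA M _ e), <- Ha, finv_reg1. reflexivity.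
Qed.

Lemma conj_idem (a e : M) : e ** e = e ->
  (a ** e ** a^-) ** (a ** e ** a^-) = a ** e ** a^-.
Proof.
  intro He.
  replace ((a ** e ** a^-) ** (a ** e ** a^-)) with (a ** (e ** (a^- ** a)) ** e ** a^-)
    by (rewrite !fmulA; reflexivity).
  rewrite (fidem_comm M e (a^- ** a) He (idem_iaa a)).
  replace (a ** (a^- ** a ** e) ** e ** a^-) with ((a ** a^- ** a) ** (e ** e) ** a^-)
    by (rewrite !fmulA; reflexivity).
  rewrite finv_reg1, He. reflexivity.
Qed.

Lemma conj_act (a e b : M) : e ** e = e ->
  (a ** e ** a^-) ** (a ** b) = a ** (e ** b).
Proof.
  intro He.
  replace ((a ** e ** a^-) ** (a ** b)) with (a ** (e ** (a^- ** a)) ** b)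
    by (rewrite !fmulA; reflexivity).
  rewrite (fidem_comm M e (a^- ** a) He (idem_iaa a)).
  replace (a ** (a^- ** a ** e) ** b) with ((a ** a^- ** a) ** (e ** b))
    by (rewrite !fmulA; reflexivity).
  rewrite finv_reg1. reflexivity.
Qed.
End Alg.
Section GrpImg.
Variable X : Type.
Variable R : imterm X -> imterm X -> Prop.

Ltac sintro := let M := fresh "M" in let f := fresh "f" in let H := fresh "HR" in
  intros M f H; simpl.

Lemma SEq_refl a : SEq R a a. Proof. sintro. reflexivity. Qed.
Lemma SEq_sym a b : SEq R a b -> SEq R b a. Proof. intros H; sintro. symmetry; apply H; auto. Qed.
Lemma SEq_trans a b c : SEq R a b -> SEq R b c -> SEq R a c.
Proof. intros H1 H2; sintro. rewrite (H1 M f HR). apply H2; auto. Qed.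

Definition GE := GEq R.

Lemma SEq_GEq a b : SEq R a b -> GE a b.
Proof. intros H. exists FOne. split; sintro.
  - apply fmul1l.
  - rewrite !fmul1l. apply H; auto. Qed.

Lemma GEq_refl a : GE a a. Proof. apply SEq_GEq, SEq_refl. Qed.
Lemma GEq_sym a b : GE a b -> GE b a.
Proof. intros [e [H1 H2]]. exists e. split; auto. apply SEq_sym; auto. Qed.
Lemma GEq_trans a b c : GE a b -> GE b c -> GE a c.
Proof.
  intros [e1 [H1 H2]] [e2 [H3 H4]]. exists (FMul e1 e2). split; sintro.
  - specialize (H1 M f HR); specialize (H3 M f HR); simpl in *.
    set (x := eval M f e1) in *; set (y := eval M f e2) in *.
    rewrite <- (fmulA M x y), (fmulA M y x), <- (fidem_comm M x y H1 H3).
    rewrite <- !fmulA, H3, fmulA, H1. reflexivity.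
  - specialize (H1 M f HR); specialize (H2 M f HR); specialize (H3 M f HR);
    specialize (H4 M f HR); simpl in *.
    rewrite (fidem_comm M _ _ H1 H3), <- fmulA, H2, fmulA, <- (fidem_comm M _ _ H1 H3),
      <- fmulA, H4, fmulA. reflexivity.
Qed.

Lemma GEq_mulr a a' b : GE a a' -> GE (FMul a b) (FMul a' b).
Proof. intros [e [H1 H2]]. exists e. split; auto. sintro.
  specialize (H2 M f HR); simpl in H2. rewrite !fmulA, H2. reflexivity. Qed.

Lemma GEq_mull a b b' : GE b b' -> GE (FMul a b) (FMul a b').
Proof. intros [e [H1 H2]]. exists (FMul (FMul a e) (FInv a)). split; sintro.
  - specialize (H1 M f HR); simpl in H1. apply conj_idem; auto.
  - specialize (H1 M f HR); specialize (H2 M f HR); simpl in *.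
    rewrite !conj_act by auto. rewrite H2. reflexivity. Qed.

Lemma GEq_mul a a' b b' : GE a a' -> GE b b' -> GE (FMul a b) (FMul a' b').
Proof. intros. eapply GEq_trans. apply GEq_mulr; eauto. apply GEq_mull; auto. Qed.

Lemma GEq_aai a : GE (FMul a (FInv a)) FOne.
Proof. exists (FMul a (FInv a)). split; sintro.
  - apply idem_aai.
  - rewrite fmul1r. apply idem_aai. Qed.
Lemma GEq_iaa a : GE (FMul (FInv a) a) FOne.
Proof. exists (FMul (FInv a) a). split; sintro.
  - apply idem_iaa.
  - rewrite fmul1r. apply idem_iaa. Qed.

Lemma GEq_FM a : GE (FM a) a.
Proof. exists (FMul a (FInv a)). split; sintro.
  - apply idem_aai.
  - rewrite mx_lemma, finv_reg1. reflexivity. Qed.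

Lemma GEq_assoc a b c : GE (FMul a (FMul b c)) (FMul (FMul a b) c).
Proof. apply SEq_GEq. sintro. apply fmulA. Qed.
Lemma GEq_1l a : GE (FMul FOne a) a.
Proof. apply SEq_GEq. sintro. apply fmul1l. Qed.
Lemma GEq_1r a : GE (FMul a FOne) a.
Proof. apply SEq_GEq. sintro. apply fmul1r. Qed.

Lemma GEq_inv a a' : GE a a' -> GE (FInv a) (FInv a').
Proof.
  intros H.
  (* a'^- ~ 1 a'^- ~ (a^- a) a'^- ~ a^- (a a'^-) ~ a^- (a' a'^-) ~ a^- 1 ~ a^- *)
  apply GEq_sym.
  eapply GEq_trans. apply GEq_sym, GEq_1l.
  eapply GEq_trans. apply GEq_mulr, GEq_sym, (GEq_iaa a).
  eapply GEq_trans. apply GEq_sym, GEq_assoc.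
  eapply GEq_trans. apply GEq_mull, GEq_mulr, H.
  eapply GEq_trans. apply GEq_mull, GEq_aai.
  apply GEq_1r.
Qed.

Local Notation G := (Gimg R).

Lemma gcls_eq a b : GE a b -> gcls R a = gcls R b.
Proof.
  intros H. unfold gcls.
  assert (E : GEq R a = GEq R b).
  { apply functional_extensionality; intro x. apply propositional_extensionality.
    split; intro Hx. eapply GEq_trans; [apply GEq_sym, H|exact Hx].
    eapply GEq_trans; [apply H|exact Hx]. }
  revert E. generalize (ex_intro (fun t : fterm X => GEq R a = GEq R t) a eq_refl).
  generalize (ex_intro (fun t : fterm X => GEq R b = GEq R t) b eq_refl).
  intros e1 e2 E. revert e2. rewrite E. intros e2. f_equal. apply proof_irrelevance.
Qed.

Lemma gcls_inj a b : gcls R a = gcls R b -> GE a b.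
Proof. intros H. apply (f_equal (@proj1_sig _ _)) in H. simpl in H.
  change (GEq R a b). rewrite H. apply GEq_refl. Qed.

Lemma gcls_grep g : gcls R (grep R g) = g.
Proof.
  unfold grep. destruct (constructive_indefinite_description _ _) as [t Ht].
  simpl. destruct g as [P HP]. simpl in Ht. subst P. unfold gcls. f_equal. apply proof_irrelevance.
Qed.

Lemma grep_gcls t : GE (grep R (gcls R t)) t.
Proof. apply gcls_inj. rewrite gcls_grep. reflexivity. Qed.

Lemma g_surj (g : G) : exists t, g = gcls R t.
Proof. exists (grep R g). symmetry; apply gcls_grep. Qed.

Definition gmul (g h : G) : G := gact R g (grep R h).
Definition ginv (g : G) : G := gcls R (FInv (grep R g)).

Lemma gact_cls a t : gact R (gcls R a) t = gcls R (FMul a t).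
Proof. unfold gact. apply gcls_eq, GEq_mulr, grep_gcls. Qed.

Lemma gmul_cls a b : gmul (gcls R a) (gcls R b) = gcls R (FMul a b).
Proof. unfold gmul, gact. apply gcls_eq, GEq_mul; apply grep_gcls. Qed.

Lemma ginv_cls a : ginv (gcls R a) = gcls R (FInv a).
Proof. unfold ginv. apply gcls_eq, GEq_inv, grep_gcls. Qed.

Lemma gact_gmul g t : gact R g t = gmul g (gcls R t).
Proof. destruct (g_surj g) as [a ->]. rewrite gact_cls, gmul_cls. reflexivity. Qed.

Lemma gone_cls : gone R = gcls R FOne. Proof. reflexivity. Qed.

Ltac gsurj := repeat match goal with g : G |- _ => let t := fresh "t" in
  destruct (g_surj g) as [t ->]; clear g end.

Lemma gmul_assoc g h k : gmul (gmul g h) k = gmul g (gmul h k).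
Proof. gsurj. rewrite !gmul_cls. apply gcls_eq, GEq_sym, GEq_assoc. Qed.
Lemma gmul_1l g : gmul (gone R) g = g.
Proof. gsurj. rewrite gone_cls, gmul_cls. apply gcls_eq, GEq_1l. Qed.
Lemma gmul_1r g : gmul g (gone R) = g.
Proof. gsurj. rewrite gone_cls, gmul_cls. apply gcls_eq, GEq_1r. Qed.
Lemma gmul_V g : gmul g (ginv g) = gone R.
Proof. gsurj. rewrite ginv_cls, gmul_cls. apply gcls_eq, GEq_aai. Qed.
Lemma gmul_Vl g : gmul (ginv g) g = gone R.
Proof. gsurj. rewrite ginv_cls, gmul_cls. apply gcls_eq, GEq_iaa. Qed.

Lemma gact_gact g s t : gact R (gact R g s) t = gact R g (FMul s t).
Proof. rewrite !gact_gmul, gmul_assoc, gmul_cls. reflexivity. Qed.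
Lemma gact_one g : gact R g FOne = g.
Proof. rewrite gact_gmul, <- gone_cls. apply gmul_1r. Qed.
Lemma gact_cong g s t : GE s t -> gact R g s = gact R g t.
Proof. intros H. rewrite !gact_gmul. f_equal. apply gcls_eq, H. Qed.

Lemma gmul_idem g : gmul g g = g -> g = gone R.
Proof. intros H. rewrite <- (gmul_V g). rewrite <- H at 2.
  rewrite gmul_assoc, gmul_V, gmul_1r. reflexivity. Qed.

Lemma gmul_cancel y g : gmul (gmul y g) (ginv g) = y.
Proof. rewrite gmul_assoc, gmul_V, gmul_1r. reflexivity. Qed.
Lemma gmul_cancel' y g : gmul (gmul y (ginv g)) g = y.
Proof. rewrite gmul_assoc, gmul_Vl, gmul_1r. reflexivity. Qed.

End GrpImg.
Arguments gmul {X} R g h.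
Arguments ginv {X} R g.
Arguments GE {X} R a b.

Section Graphs.
Variable X : Type.
Variable R : imterm X -> imterm X -> Prop.
Local Notation G := (Gimg R).
Local Notation V := (sgV R).
Local Notation E := (sgE R).

Fixpoint pin (D : subgraph R) (h : G) (u : word X) : Prop :=
  match u with
  | [] => V D h
  | a :: u' => V D h /\ E D h a /\ pin D (gstep R h a) u'
  end.

Fixpoint jin (D : subgraph R) (g : G) (acc u : word X) (t : list (word X * word X)) : Prop :=
  pin D (gact R g (wterm acc)) u /\
  match t with
  | [] => True
  | (v, u') :: t' => jin D g (acc ++ u ++ v) u' t'
  end.

Lemma gen_sub D V0 E0 : is_subgraph R D -> (forall h, V0 h -> V D h) ->
  (forall h b, E0 h b -> E D h b) -> sg_sub R (gen_sg R V0 E0) D.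
Proof. intros HD H1 H2. split; intros g; simpl; eauto. Qed.

Lemma gen_in V0 E0 : (forall h, V0 h -> V (gen_sg R V0 E0) h) /\
  (forall h b, E0 h b -> E (gen_sg R V0 E0) h b).
Proof. split; simpl; eauto. Qed.

Lemma gen_is_sub V0 E0 : is_subgraph R (gen_sg R V0 E0).
Proof. intros g a H. simpl in *. repeat split; intros D HD H1 H2; apply (HD g a); auto. Qed.

Lemma sub_trans A B C : sg_sub R A B -> sg_sub R B C -> sg_sub R A C.
Proof. intros [H1 H2] [H3 H4]; split; auto. Qed.
Lemma sub_refl A : sg_sub R A A. Proof. split; auto. Qed.

Lemma union_sub A B D : sg_sub R (sg_union R A B) D <-> sg_sub R A D /\ sg_sub R B D.
Proof. simpl. split.
  - intros [H1 H2]; split; split; intros; [apply H1|apply H2|apply H1|apply H2]; simpl; auto.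
  - intros [[H1 H2] [H3 H4]]; split; [intros ? []|intros ? ? []]; auto. Qed.

Lemma union_is_sub A B : is_subgraph R A -> is_subgraph R B -> is_subgraph R (sg_union R A B).
Proof. intros HA HB g a [H|H]; simpl; [destruct (HA g a H) as [? []]|destruct (HB g a H) as [? []]];
  repeat split; auto. Qed.

Lemma empty_is_sub : is_subgraph R (sg_empty R). Proof. intros g a []. Qed.

Lemma path_sub D h u : is_subgraph R D -> (sg_sub R (path_sg R h u) D <-> pin D h u).
Proof.
  intros HD. split.
  - intros [H1 H2]. unfold path_sg in *.
    assert (HV : forall g, pathV R h u g -> V D g) by (intros; apply H1, gen_in; auto).
    assert (HE : forall g b, pathE R h u g b -> E D g b) by (intros; apply H2, gen_in; auto).
    clear H1 H2. revert h HV HE. induction u as [|a u IH]; intros h HV HE; simpl in *.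
    + apply HV; reflexivity.
    + split; [apply HV; left; reflexivity|]. split; [apply HE; left; split; reflexivity|].
      apply IH; intros; [apply HV|apply HE]; right; auto.
  - intros H. apply gen_sub; auto.
    + revert h H. induction u as [|a u IH]; simpl; intros h H g Hg.
      * subst; auto.
      * destruct H as [? [? ?]]. destruct Hg; [subst; auto|eauto].
    + revert h H. induction u as [|a u IH]; simpl; intros h H g b Hg.
      * destruct Hg.
      * destruct H as [? [? ?]]. destruct Hg as [[-> ->]|]; [auto|eauto].
Qed.

Lemma jsp_sub D g acc u t : is_subgraph R D -> (sg_sub R (jsp R g acc u t) D <-> jin D g acc u t).
Proof.
  intros HD. revert acc u. induction t as [|[v u'] t IH]; intros acc u; simpl jsp; simpl jin;
  rewrite union_sub, path_sub by auto.
  - split; [intros []; auto|intros [H _]; split; auto; split; [intros ? []|intros ? ? []]].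
  - rewrite IH. tauto.
Qed.

Lemma jsp_is_sub g acc u t : is_subgraph R (jsp R g acc u t).
Proof. revert acc u. induction t as [|[v u'] t IH]; intros; simpl;
  apply union_is_sub; unfold path_sg; auto using gen_is_sub, empty_is_sub. Qed.

Lemma pin_mono D1 D2 h u : sg_sub R D1 D2 -> pin D1 h u -> pin D2 h u.
Proof. intros [H1 H2]. revert h; induction u; simpl; intuition. Qed.
Lemma jin_mono D1 D2 g acc u t : sg_sub R D1 D2 -> jin D1 g acc u t -> jin D2 g acc u t.
Proof. intros H. revert acc u; induction t as [|[v u'] t IH]; simpl; intros acc u [H1 H2];
  split; eauto using pin_mono. Qed.

Lemma wterm_app a b : GE R (wterm (a ++ b)) (FMul (wterm a) (wterm b)).
Proof. apply SEq_GEq. intros M f HR. induction a as [|x a IH]; simpl.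
  - rewrite fmul1l; reflexivity.
  - rewrite IH. apply fmulA. Qed.

Lemma jin_shift D g g' acc acc' u t :
  gact R g (wterm acc) = gact R g' (wterm acc') -> (jin D g acc u t <-> jin D g' acc' u t).
Proof.
  revert acc acc' u. induction t as [|[v u'] t IH]; intros acc acc' u He; simpl.
  - rewrite He; tauto.
  - rewrite He, (IH (acc ++ u ++ v) (acc' ++ u ++ v)). tauto.
    rewrite !(gact_cong _ _ _ _ _ (wterm_app _ _)), <- !gact_gact, He. reflexivity.
Qed.

Lemma gstep_gact h a : gstep R h a = gact R h (lterm a). Proof. reflexivity. Qed.

Lemma pin_start D h u : pin D h u -> V D h.
Proof. destruct u; simpl; tauto. Qed.

Lemma pin_end D h u : pin D h u -> V D (gact R h (wterm u)).
Proof. revert h; induction u as [|a u IH]; simpl; intros h H.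
  - rewrite gact_one; auto.
  - rewrite <- gact_gact. apply IH. tauto. Qed.

Lemma jin_start D g u t : jin D g [] u t -> V D g.
Proof. destruct t as [|[]]; simpl; intros [H _]; rewrite gact_one in H; eapply pin_start; eauto. Qed.

End Graphs.
Arguments pin {X} R D h u.
Arguments jin {X} R D g acc u t.
Section Model.
Variable X : Type.
Variable R : imterm X -> imterm X -> Prop.
Local Notation G := (Gimg R).
Local Notation V := (sgV R).
Local Notation E := (sgE R).
Variable D : subgraph R.
Hypothesis HD : is_subgraph R D.

Record mel := MEl { mA : G -> Prop; mg : G;
  mP : forall y, mA y -> V D y /\ V D (gmul R y mg) }.

Lemma mel_ext (a b : mel) : (forall y, mA a y <-> mA b y) -> mg a = mg b -> a = b.
Proof.
  destruct a as [A g P], b as [B h Q]; simpl; intros H1 H2.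
  assert (A = B) by (apply functional_extensionality; intro; apply propositional_extensionality; auto).
  subst. f_equal. apply proof_irrelevance.
Qed.

Program Definition mmul (a b : mel) : mel :=
  MEl (fun y => mA a y /\ mA b (gmul R y (mg a))) (gmul R (mg a) (mg b)) _.
Next Obligation.
  destruct (mP a y H) as [H1 _]. destruct (mP b _ H0) as [_ H2].
  rewrite gmul_assoc in H2. auto.
Qed.

Program Definition mone : mel := MEl (fun y => V D y) (gone R) _.
Next Obligation. rewrite gmul_1r. auto. Qed.

Program Definition minv (a : mel) : mel :=
  MEl (fun y => mA a (gmul R y (ginv R (mg a)))) (ginv R (mg a)) _.
Next Obligation.
  destruct (mP a _ H) as [H1 H2]. rewrite gmul_cancel' in H2. auto.
Qed.

Program Definition mmx (a : mel) : mel :=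
  MEl (fun y => V D y /\ V D (gmul R y (mg a))) (mg a) _.

Lemma m_assoc a b c : mmul a (mmul b c) = mmul (mmul a b) c.
Proof. apply mel_ext; simpl.
  - intro y. rewrite gmul_assoc. tauto.
  - rewrite gmul_assoc. reflexivity. Qed.
Lemma m_1l a : mmul mone a = a.
Proof. apply mel_ext; simpl.
  - intro y. rewrite gmul_1r. split; [tauto|]. intro H; split; auto. apply (mP a y H).
  - apply gmul_1l. Qed.
Lemma m_1r a : mmul a mone = a.
Proof. apply mel_ext; simpl.
  - intro y. split; [tauto|]. intro H; split; auto. apply (mP a y H).
  - apply gmul_1r. Qed.
Lemma m_reg1 a : mmul (mmul a (minv a)) a = a.
Proof. apply mel_ext; simpl.
  - intro y. rewrite gmul_cancel, gmul_V, gmul_1r. tauto.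
  - rewrite gmul_V, gmul_1l. reflexivity. Qed.
Lemma m_reg2 a : mmul (mmul (minv a) a) (minv a) = minv a.
Proof. apply mel_ext; simpl.
  - intro y. rewrite gmul_Vl, gmul_1r. tauto.
  - rewrite gmul_Vl, gmul_1l. reflexivity. Qed.

Lemma m_idem e : mmul e e = e -> mg e = gone R.
Proof. intros H. apply gmul_idem. apply (f_equal mg) in H. exact H. Qed.

Lemma m_comm e f : mmul e e = e -> mmul f f = f -> mmul e f = mmul f e.
Proof. intros He Hf. apply m_idem in He. apply m_idem in Hf.
  apply mel_ext; [intro y; cbn; rewrite He, Hf, !gmul_1r; tauto| cbn; rewrite He, Hf; reflexivity]. Qed.

Program Definition mzero : mel := MEl (fun _ => False) (gone R) _.
Next Obligation. tauto. Qed.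

Lemma m_sigma a : exists e, mmul e e = e /\ mmul e a = mmul e (mmx a).
Proof. exists mzero. split; apply mel_ext; simpl; try tauto; try reflexivity.
  apply gmul_1l. Qed.

Program Definition mrestr (b : mel) : mel := MEl (mA b) (gone R) _.
Next Obligation. rewrite gmul_1r. destruct (mP b y H); auto. Qed.

Lemma m_max a b : (exists e, mmul e e = e /\ mmul e a = mmul e b) ->
  exists e, mmul e e = e /\ b = mmul e (mmx a).
Proof.
  intros [e [He Hab]]. assert (Hg : mg a = mg b).
  { apply (f_equal mg) in Hab. simpl in Hab. rewrite (m_idem e He), !gmul_1l in Hab. auto. }
  exists (mrestr b). split.
  - apply mel_ext; simpl; [|apply gmul_1l]. intro y; rewrite gmul_1r; tauto.
  - apply mel_ext; simpl; [|rewrite gmul_1l; auto].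
    intro y; rewrite gmul_1r, Hg. split; [intro H; destruct (mP b y H); tauto|tauto].
Qed.

Definition Mod : FInvMonoid :=
  {| car := mel; fmul := mmul; fone := mone; finv := minv; fmx := mmx;
     fmulA := m_assoc; fmul1l := m_1l; fmul1r := m_1r; finv_reg1 := m_reg1;
     finv_reg2 := m_reg2; fidem_comm := m_comm; fmx_sigma := m_sigma; fmx_max := m_max |}.

Program Definition fx (x : X) : mel :=
  MEl (fun y => E D y (x, false)) (gcls R (FVar x)) _.
Next Obligation.
  destruct (HD _ _ H) as [H1 [H2 _]]. rewrite <- gact_gmul. auto.
Qed.

Lemma snd_eval t : mg (eval Mod fx t) = gcls R t.
Proof. induction t; simpl; try reflexivity.
  - rewrite IHt1, IHt2, gmul_cls. reflexivity.
  - rewrite IHt, ginv_cls. reflexivity.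
  - rewrite IHt. apply gcls_eq, GEq_sym, GEq_FM. Qed.

Lemma fst_mul a b y : mA (mmul a b) y <-> mA a y /\ mA b (gmul R y (mg a)).
Proof. reflexivity. Qed.

Lemma lterm_eval a y : mA (eval Mod fx (lterm a)) y <-> E D y a.
Proof.
  destruct a as [x []]; unfold lterm; cbn; [|tauto].
  rewrite ginv_cls, <- gact_gmul. split; intro H.
  - destruct (HD _ _ H) as [_ [_ H3]]. simpl in H3.
    replace (gstep R (gact R y (FInv (FVar x))) (x, false)) with y in H3; auto.
    unfold gstep; simpl. rewrite gact_gact, (gact_cong _ _ _ _ _ (GEq_iaa _ _ _)), gact_one.
    reflexivity.
  - destruct (HD _ _ H) as [_ [_ H3]]. exact H3.
Qed.

Lemma word_eval u y : mA (eval Mod fx (wterm u)) y <-> pin R D y u.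
Proof.
  revert y; induction u as [|a u IH]; intro y; simpl wterm; simpl pin.
  - simpl. tauto.
  - change (eval Mod fx (FMul (lterm a) (wterm u))) with
      (mmul (eval Mod fx (lterm a)) (eval Mod fx (wterm u))).
    rewrite fst_mul, lterm_eval, snd_eval, <- gact_gmul, IH.
    split; [|tauto]. intros [H1 H2]; repeat split; auto. apply (HD _ _ H1).
Qed.

Fixpoint tf (c : mel) (t : list (word X * word X)) : mel :=
  match t with
  | [] => c
  | (v, u) :: t' => tf (mmul (mmul c (mmx (eval Mod fx (wterm v)))) (eval Mod fx (wterm u))) t'
  end.

Lemma tail_eval a t : eval Mod fx (tail_term a t) = tf (eval Mod fx a) t.
Proof. revert a; induction t as [|[v u] t IH]; intro a; simpl; auto. Qed.

Lemma tf_mul c d t : tf (mmul c d) t = mmul c (tf d t).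
Proof. revert c d; induction t as [|[v u] t IH]; intros c d; simpl; auto.
  rewrite <- !m_assoc, IH. reflexivity. Qed.

Lemma im_eval u0 t y : mA (eval Mod fx (imterm_term (IM u0 t))) y <-> jin R D y [] u0 t.
Proof.
  revert u0 y; induction t as [|[v u1] t IH]; intros u0 y.
  - unfold imterm_term; simpl. rewrite word_eval, gact_one. tauto.
  - unfold imterm_term; simpl im_head; simpl im_tail. rewrite tail_eval. simpl tf.
    rewrite tf_mul. rewrite <- tail_eval. change (tail_term (wterm u1) t) with (imterm_term (IM u1 t)).
    rewrite fst_mul, IH. simpl mg. simpl (mA (mmul _ _) _).
    rewrite word_eval, !snd_eval. simpl jin. rewrite gact_one.
    rewrite (jin_shift _ R D y (gact R y (FMul (wterm u0) (FM (wterm v)))) (u0 ++ v) []).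
    + replace (gact R y (FMul (wterm u0) (FM (wterm v)))) with
        (gmul R (gmul R y (gcls R (wterm u0))) (gcls R (wterm v))).
      * rewrite <- gmul_assoc. split; [tauto|]. intros [H1 H2]. split; [split|]; auto.
        split; [rewrite <- gact_gmul; apply pin_end; auto|]. eapply jin_start; eauto.
      * rewrite <- !gact_gmul, gact_gact. apply gact_cong. apply GEq_mull, GEq_sym, GEq_FM.
    + rewrite gact_one. apply gact_cong. eapply GEq_trans. apply wterm_app.
      apply GEq_mull, GEq_sym, GEq_FM.
Qed.

End Model.
Arguments mA {X R D} m y.
Arguments mg {X R D} m.

Section Main.
Variable X : Type.
Variable R : imterm X -> imterm X -> Prop.
Local Notation G := (Gimg R).
Local Notation V := (sgV R).
Local Notation E := (sgE R).

Lemma journey_char D (HD : is_subgraph R D) g u :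
  sg_sub R (journey_sg R g u) D <-> mA (eval (Mod X R D) (fx X R D HD) (imterm_term u)) g.
Proof. destruct u as [u0 t]. unfold journey_sg; simpl im_head; simpl im_tail.
  rewrite jsp_sub by exact HD. rewrite im_eval. tauto. Qed.

Lemma journey_start D (HD : is_subgraph R D) g u : sg_sub R (journey_sg R g u) D -> V D g.
Proof. rewrite (journey_char D HD). intro H. exact (proj1 (mP _ _ _ _ _ H)). Qed.

Lemma journey_end D (HD : is_subgraph R D) g u :
  sg_sub R (journey_sg R g u) D -> V D (gact R g (imterm_term u)).
Proof. rewrite (journey_char D HD). intro H. pose proof (proj2 (mP _ _ _ _ _ H)) as H2.
  rewrite snd_eval, <- gact_gmul in H2. exact H2. Qed.

Lemma R_gact u v g : R u v -> gact R g (imterm_term u) = gact R g (imterm_term v).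
Proof. intros H. apply gact_cong, SEq_GEq. intros M f HR. apply HR; auto. Qed.

Lemma cR_cS D (HD : is_subgraph R D) : cQ_closed R R D -> cQ_closed R (QS R) D.
Proof.
  intros Hc.
  assert (Hsat : forall u v, R u v -> eval (Mod X R D) (fx X R D HD) (imterm_term u) =
                                     eval (Mod X R D) (fx X R D HD) (imterm_term v)).
  { intros u v Huv. apply mel_ext.
    - intro y. rewrite <- !(journey_char D HD). pose proof (R_gact u v y Huv) as Heq.
      split; intro Hj.
      + pose proof (journey_start D HD _ _ Hj) as Vy. pose proof (journey_end D HD _ _ Hj) as Vh.
        destruct (Hc u v y _ Huv Vy Vh) as [H1 _].
        destruct (H1 (conj eq_refl Hj)) as [_ Hv]. exact Hv.
      + pose proof (journey_start D HD _ _ Hj) as Vy. pose proof (journey_end D HD _ _ Hj) as Vh.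
        rewrite <- Heq in Vh.
        destruct (Hc u v y _ Huv Vy Vh) as [_ H2].
        destruct (H2 (conj (eq_sym Heq) Hj)) as [_ Hu]. exact Hu.
    - rewrite !snd_eval. apply gcls_eq, SEq_GEq. intros M f HR. apply HR; auto. }
  intros u v g h HQ Vg Vh.
  pose proof (HQ (Mod X R D) (fx X R D HD) Hsat) as Hev.
  assert (Heq : gact R g (imterm_term u) = gact R g (imterm_term v)) by
    (apply gact_cong, SEq_GEq; exact HQ).
  unfold labels_journey. rewrite !(journey_char D HD), Hev, Heq. tauto.
Qed.

Lemma cS_cR D : cQ_closed R (QS R) D -> cQ_closed R R D.
Proof. intros H u v g h Huv. apply H. intros M f HR. apply HR; auto. Qed.

Variable Rsym : forall u v, R u v -> R v u.
Variable w : imterm X.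

Local Notation Dl := (Delta R w).
Local Notation BU := (sg_bigunion R (Delta R w)).

Lemma journey_is_sub g u : is_subgraph R (journey_sg R g u).
Proof. unfold journey_sg. apply jsp_is_sub. Qed.

Lemma Delta_is_sub n : is_subgraph R (Dl n).
Proof.
  induction n as [|n IH]; simpl.
  - apply journey_is_sub.
  - intros g a [H|[u [v [h [Ru [Vh [Hs He]]]]]]].
    + destruct (IH g a H) as [H1 [H2 H3]]. simpl. auto.
    + destruct (journey_is_sub h v g a He) as [H1 [H2 H3]]. simpl.
      split; [|split]; right; exists u, v, h; auto.
Qed.

Lemma Delta_mono_le n m : n <= m -> sg_sub R (Dl n) (Dl m).
Proof. induction 1. apply sub_refl. eapply sub_trans; [exact IHle|]. split; simpl; auto. Qed.

Lemma BU_is_sub : is_subgraph R BU.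
Proof. intros g a [i H]. destruct (Delta_is_sub i g a H) as [H1 [H2 H3]].
  split; [|split]; exists i; auto. Qed.

Lemma pin_fin h u : pin R BU h u -> exists N, pin R (Dl N) h u.
Proof.
  revert h; induction u as [|a u IH]; simpl; intros h H.
  - exact H.
  - destruct H as [[i1 H1] [[i2 H2] H3]]. destruct (IH _ H3) as [i3 H4].
    exists (i1 + i2 + i3). split; [|split].
    + apply (Delta_mono_le i1); [lia|auto].
    + apply (Delta_mono_le i2); [lia|auto].
    + apply (pin_mono _ R (Dl i3)); auto. apply Delta_mono_le; lia.
Qed.

Lemma jin_fin g acc u t : jin R BU g acc u t -> exists N, jin R (Dl N) g acc u t.
Proof.
  revert acc u; induction t as [|[v u'] t IH]; simpl; intros acc u [H1 H2].
  - destruct (pin_fin _ _ H1) as [N HN]. exists N; auto.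
  - destruct (pin_fin _ _ H1) as [N1 HN1]. destruct (IH _ _ H2) as [N2 HN2].
    exists (N1 + N2). split.
    + apply (pin_mono _ R (Dl N1)); auto. apply Delta_mono_le; lia.
    + apply (jin_mono _ R (Dl N2)); auto. apply Delta_mono_le; lia.
Qed.

Lemma BU_step u v g : R u v -> sg_sub R (journey_sg R g u) BU -> sg_sub R (journey_sg R g v) BU.
Proof.
  intros Huv Hs. destruct u as [u0 t]. unfold journey_sg in Hs; simpl in Hs.
  rewrite jsp_sub in Hs by apply BU_is_sub. destruct (jin_fin _ _ _ _ Hs) as [N HN].
  rewrite <- jsp_sub in HN by apply Delta_is_sub.
  assert (HNg : V (Dl N) g) by (apply (journey_start _ (Delta_is_sub N) g (IM u0 t)); exact HN).
  assert (Hv : sg_sub R (journey_sg R g v) (Dl (S N))).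
  { split; intros; simpl; right; exists (IM u0 t), v, g; auto. }
  eapply sub_trans; [exact Hv|]. split; intros; exists (S N); auto.
Qed.

Lemma BU_closed : cQ_closed R R BU.
Proof.
  intros u v g h Huv Vg Vh. unfold labels_journey. split; intros [Hact Hs].
  - split; [rewrite <- (R_gact u v g Huv); auto|]. eapply BU_step; eauto.
  - split; [rewrite (R_gact u v g Huv); auto|]. eapply BU_step; eauto.
Qed.

Lemma clR_BU : sg_sub R (cQ_closure R R (wbar R w)) BU.
Proof.
  assert (Hw : sg_sub R (wbar R w) BU) by (split; intros; exists 0; auto).
  split; intros; [apply (H BU)|apply (H BU)]; auto using BU_is_sub, BU_closed.
Qed.

Lemma Delta_in D' : is_subgraph R D' -> cQ_closed R R D' -> sg_sub R (wbar R w) D' ->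
  forall n, sg_sub R (Dl n) D'.
Proof.
  intros HD Hc Hw n. induction n as [|n IH]; simpl; auto.
  assert (Key : forall u v h, R u v -> V (Dl n) h -> sg_sub R (journey_sg R h u) (Dl n) ->
            sg_sub R (journey_sg R h v) D').
  { intros u v h Huv Vh Hs. assert (Hs' := sub_trans _ _ _ _ _ Hs IH).
    pose proof (journey_start D' HD _ _ Hs') as V1. pose proof (journey_end D' HD _ _ Hs') as V2.
    destruct (Hc u v h _ Huv V1 V2) as [H1 _]. destruct (H1 (conj eq_refl Hs')) as [_ Hv]. exact Hv. }
  destruct IH as [IH1 IH2].
  split; simpl; intros g.
  - intros [H|[u [v [h [Ru [Vh [Hs He]]]]]]]; auto. apply (Key u v h Ru Vh Hs); auto.
  - intros a [H|[u [v [h [Ru [Vh [Hs He]]]]]]]; auto. apply (Key u v h Ru Vh Hs); auto.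
Qed.

Lemma BU_clR : sg_sub R BU (cQ_closure R R (wbar R w)).
Proof. split; simpl; intros g.
  - intros [i H] D' HD Hc Hw. apply (Delta_in D' HD Hc Hw i); auto.
  - intros a [i H] D' HD Hc Hw. apply (Delta_in D' HD Hc Hw i); auto.
Qed.

Lemma FG_clR : sg_eq R (FGamma R w) (cQ_closure R R (wbar R w)).
Proof. split; split; simpl; intros.
  - apply H; auto. apply cR_cS; auto.
  - apply H; auto. apply cR_cS; auto.
  - apply H; auto. apply cS_cR; auto.
  - apply H; auto. apply cS_cR; auto.
Qed.

End Main.

Theorem mainTheorem11 (X : Type) (R : imterm X -> imterm X -> Prop)
  (Rsym : forall u v, R u v -> R v u) (w : imterm X) :
  sg_eq R (FGamma R w) (cQ_closure R R (wbar R w)) /\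
  sg_eq R (FGamma R w) (sg_bigunion R (Delta R w)).
Proof.
  destruct (FG_clR X R w) as [H1 H2]. split; [split; auto|].
  split; eapply sub_trans; eauto using clR_BU, BU_clR.
Qed.
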